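(* Let $s\ge1$ and $v\ge 2$ be integers. If there exists an orthogonal array OA$(s,2s,v)$, then there exists a $(t_i,t_o,s,v)$-AONT for all integers $t_i,t_o$ with $1\le t_i\le t_o\le s$.
   Context: An $(N,k,v)$-array is an $N\times k$ array with entries from an alphabet $\Gamma$ of size $v$. For a set $D$ of columns, the array is unbiased with respect to $D$ if the rows of the subarray consisting of the columns in $D$ contain every $|D|$-tuple over $\Gamma$ exactly $N/v^{|D|}$ times. An orthogonal array OA$(t,k,v)$ is a $(v^t,k,v)$-array that is unbiased with respect to every set of $t$ columns. For integers $1\le t_i\le t_o\le s$, a $(t_i,t_o,s,v)$-all-or-nothing transform (AONT) is a $(v^s,2s,v)$-array with columns labelled $1,\dots,2s$ that is unbiased with respect to $\{1,\dots,s\}$, with respect to $\{s+1,\dots,2s\}$, and with respect to $I\cup J$ for every $I\subseteq\{1,\dots,s\}$ with $|I|=t_i$ and every $J\subseteq\{s+1,\dots,2s\}$ with $|J|=s-t_o$. *)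

(* Defs.v *)
From mathcomp Require Import all_boot.
Set Implicit Arguments. Unset Strict Implicit. Unset Printing Implicit Defensive.

(* An (N,k,v)-array over the alphabet 'I_v: rows 'I_N, columns 'I_k
   (column labels 1..k of the paper are 0..k-1 here). *)
Definition array (N k v : nat) := 'I_N -> 'I_k -> 'I_v.

(* Unbiased w.r.t. the column set D: every |D|-tuple over the alphabet
   (represented as an assignment x of symbols to the columns of D) occurs in
   exactly N / v^|D| rows of the subarray on D (stated multiplicatively). *)
Definition unbiased (N k v : nat) (A : array N k v) (D : {set 'I_k}) : Prop :=
  forall x : {ffun 'I_k -> 'I_v},
    #|[set r : 'I_N | [forall c in D, A r c == x c]]| * v ^ #|D| = N.

Definition is_OA (t k v : nat) (A : array (v ^ t) k v) : Prop :=
  forall D : {set 'I_k}, #|D| = t -> unbiased A D.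

(* Columns 1..s of the paper = indices < s; columns s+1..2s = indices >= s. *)
Definition first_half (s : nat) : {set 'I_(2 * s)} := [set i : 'I_(2 * s) | i < s].
Definition second_half (s : nat) : {set 'I_(2 * s)} := [set i : 'I_(2 * s) | s <= i].

Definition is_AONT (ti to s v : nat) (A : array (v ^ s) (2 * s) v) : Prop :=
  [/\ unbiased A (first_half s),
      unbiased A (second_half s) &
      forall I J : {set 'I_(2 * s)},
        I \subset first_half s -> #|I| = ti ->
        J \subset second_half s -> #|J| = s - to ->
        unbiased A (I :|: J)].

(* Main.v *)
Require Import Defs.
From mathcomp Require Import all_boot.

Section S.
Variables (N k v : nat) (A : array N k v).

Lemma unb_remove (D : {set 'I_k}) (c : 'I_k) :
  0 < v -> c \in D -> unbiased A D -> unbiased A (D :\ c).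
Proof.
move=> vpos cD U x.
set S := [set r : 'I_N | [forall j in D :\ c, A r j == x j]].
have HS : #|S| = \sum_(a : 'I_v) #|[set r : 'I_N | [forall j in D,
          A r j == [ffun j' => if j' == c then a else x j'] j]]|.
  rewrite -sum1_card.
  rewrite (eq_bigr (fun r => \sum_(a : 'I_v) (A r c == a : nat))); last first.
    move=> r _; rewrite (bigD1 (A r c)) //= eqxx big1 // => a /negbTE.
    by rewrite eq_sym => ->.
  rewrite exchange_big /=; apply: eq_bigr => a _.
  rewrite -sum1_card big_mkcond [RHS]big_mkcond /=; apply: eq_bigr => r _.
  rewrite !inE.
  have -> : [forall j in D, A r j == [ffun j' => if j' == c then a else x j'] j]
     = [forall j in D :\ c, A r j == x j] && (A r c == a).
    apply/forallP/andP.
      move=> H; split.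
        apply/forallP => j; apply/implyP; rewrite !inE => /andP[jc jD].
        by move: (H j); rewrite jD ffunE (negbTE jc).
      by move: (H c); rewrite cD ffunE eqxx.
    move=> [] /forallP H ea j; apply/implyP => jD.
    rewrite ffunE; case: (j =P c) => [->|/eqP jc]; first by [].
    by move: (H j); rewrite !inE jc jD.
  by case: [forall j in D :\ c, A r j == x j]; case: (A r c == a).
have Hc : #|D| = #|D :\ c|.+1 by rewrite (cardsD1 c D) cD.
have E : #|S| * v ^ #|D| = v * N.
  rewrite HS big_distrl /= (eq_bigr (fun _ => N)); last by move=> a _; apply: U.
  by rewrite sum_nat_const card_ord.
move: E; rewrite Hc expnS mulnCA => /eqP; rewrite eqn_pmul2l // => /eqP.
by [].
Qed.

Lemma unb_small (t : nat) :
  0 < v -> t <= k -> (forall D : {set 'I_k}, #|D| = t -> unbiased A D) ->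
  forall n (D : {set 'I_k}), #|D| + n = t -> unbiased A D.
Proof.
move=> vpos tk H; elim=> [|n IH] D HD; first by apply: H; rewrite -HD addn0.
have : #|D| < #|'I_k|.
  by rewrite card_ord; apply: leq_trans tk; rewrite -HD addnS ltnS leq_addr.
case/boolP: (D == setT) => [/eqP->|nT].
  by rewrite cardsT ltnn.
move=> _.
have [c cD] : exists c, c \notin D.
  apply/existsP; move: nT; apply: contraR; rewrite negb_exists => /forallP Hf.
  by apply/eqP/setP => j; rewrite inE; move: (Hf j); rewrite negbK.
have -> : D = (c |: D) :\ c.
  by apply/setP => j; rewrite !inE; case: eqP => // ->; rewrite (negbTE cD).
apply: unb_remove => //; first by rewrite !inE eqxx.
by apply: IH; rewrite cardsU1 cD addSn -addnS.
Qed.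

End S.

Theorem mainTheorem2 (s v : nat) (hs : 1 <= s) (hv : 2 <= v) :
  (exists A : array (v ^ s) (2 * s) v, is_OA A) ->
  forall ti to : nat, 1 <= ti -> ti <= to -> to <= s ->
    exists B : array (v ^ s) (2 * s) v, is_AONT ti to B.
Proof.
move=> [A HA] ti to h1 h2 h3; exists A.
have vpos : 0 < v by apply: leq_trans hv.
have sk : s <= 2 * s by rewrite mul2n -addnn leq_addr.
have key : forall D : {set 'I_(2 * s)}, #|D| <= s -> unbiased A D.
  move=> D HD; apply: (@unb_small _ _ _ A s vpos sk HA (s - #|D|)).
  by rewrite subnKC.
have F : #|first_half s| = s.
  have -> : first_half s = [set widen_ord sk i | i : 'I_s].
    apply/setP => j; rewrite inE; apply/idP/imsetP.
      by move=> js; exists (Ordinal js) => //; apply: val_inj.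
    by move=> [i _ ->] /=.
  by rewrite card_imset ?card_ord // => i j /(congr1 val) /= ij; apply: val_inj.
have SC : second_half s = ~: first_half s.
  by apply/setP => j; rewrite !inE leqNgt.
split.
- by apply: key; rewrite F.
- apply: key; move: (cardsC (first_half s)); rewrite -SC F card_ord.
  by move=> E; rewrite -(leq_add2l s) E mul2n -addnn.
- move=> I J _ HI _ HJ; apply: key.
  apply: leq_trans (leq_card_setU I J) _.
  rewrite HI HJ.
  by rewrite addnBA ?leq_subLR ?leq_add2r //; apply: leq_trans h3 (leq_addl _ _).
Qed.
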